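(* Let $R_1$ and $R_2$ be finite commutative principal ideal rings with unity, and let $R=R_1\times R_2$. Suppose $\operatorname{diam}(\Gamma(R_1))=\operatorname{diam}(\Gamma(R_2))=1$. Then $\overline{\Gamma(R)}$ is not a divisor graph.
   Context: For a commutative ring $S$ with unity, $Z(S)$ denotes its set of zero divisors. The zero divisor graph $\Gamma(S)$ is the simple graph with vertex set $Z(S)\setminus\{0\}$, distinct $a,b$ adjacent iff $ab=0$; its complement $\overline{\Gamma(S)}$ has the same vertex set with distinct $a,b$ adjacent iff $ab\neq 0$. The diameter of a graph is the maximum distance (number of edges in a shortest path) between pairs of vertices. For a nonempty set $T$ of positive integers, the divisor graph $G(T)$ has vertex set $T$, with distinct $i,j$ adjacent iff $i\mid j$ or $j\mid i$; a graph is a divisor graph if it is isomorphic to some $G(T)$. *)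

(* Defs.v *)
From HB Require Import structures.
From mathcomp Require Import all_boot all_order all_algebra.
Set Implicit Arguments. Unset Strict Implicit. Unset Printing Implicit Defensive.
Import GRing.Theory.
Local Open Scope ring_scope.

HB.instance Definition _ (R1 R2 : finComNzRingType) := Finite.on (R1 * R2)%type.

Definition zero_divisor (S : finComNzRingType) (a : S) : bool :=
  [exists b : S, (b != 0) && (a * b == 0)].

Definition zdg_vertices (S : finComNzRingType) : {set S} :=
  [set a | zero_divisor a & a != 0].

Definition zdg_adj (S : finComNzRingType) : rel S := fun a b => a * b == 0.
Definition zdg_compl_adj (S : finComNzRingType) : rel S := fun a b => a * b != 0.

(* Simple graph given by a vertex set A and a relation e (only its values on
   distinct elements of A matter).  Edge relation restricted accordingly. *)
Definition gedge (V : finType) (A : {set V}) (e : rel V) : rel V :=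
  fun u v => [&& u \in A, v \in A, u != v & e u v].

Definition dist_le (V : finType) (A : {set V}) (e : rel V) (u v : V) (k : nat)
  : Prop :=
  exists p : seq V, [&& path (gedge A e) u p, last u p == v & size p <= k]%N.

Definition has_diameter (V : finType) (A : {set V}) (e : rel V) (d : nat) : Prop :=
  (forall u v, u \in A -> v \in A -> dist_le A e u v d) /\
  (exists u v, [/\ u \in A, v \in A &
     forall k, (k < d)%N -> ~ dist_le A e u v k]).

(* (A, e) is a divisor graph: isomorphic to G(T) for a nonempty set T of
   positive integers, i.e. there is an injective map f from A to positive
   integers such that distinct u, v are adjacent iff f u | f v or f v | f u
   (T is then the image of f). *)
Definition is_divisor_graph (V : finType) (A : {set V}) (e : rel V) : Prop :=
  A != set0 /\
  exists f : V -> nat,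
    [/\ {in A &, injective f},
        {in A, forall u, (0 < f u)%N} &
        {in A &, forall u v, u != v ->
            e u v = (f u %| f v)%N || (f v %| f u)%N}].

Definition is_ideal (S : finComNzRingType) (I : {set S}) : Prop :=
  [/\ (0 : S) \in I,
      {in I &, forall x y, x + y \in I},
      {in I, forall x, - x \in I} &
      forall r, {in I, forall x, r * x \in I}].

Definition principal_ideal_ring (S : finComNzRingType) : Prop :=
  forall I : {set S}, is_ideal I -> exists a : S, I = [set a * r | r : S].

(* Main.v *)
Require Import Defs.
From mathcomp Require Import all_boot all_order all_algebra.
Local Open Scope ring_scope.
Import GRing.Theory.

Lemma extract (R : finComNzRingType) :
  has_diameter (zdg_vertices R) (@zdg_adj R) 1 ->
  exists a b : R, [/\ (a == 0) = false, (b == 0) = false, (a == 1) = false,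
     (b == 1) = false & (a == b) = false] /\ a * b = 0.
Proof.
move=> [D1 [a [b [Ha Hb Hk]]]].
have nab : (a == b) = false.
  apply/negbTE/negP => /eqP eab; apply: (Hk 0%N isT); exists [::].
  by rewrite /= eab eqxx.
have [p /and3P [pp lp sp]] := D1 a b Ha Hb.
have ab0 : a * b = 0.
  case: p pp lp sp => [|x [|y p]] //=.
    by move=> _ lp; rewrite lp in nab.
  by rewrite andbT /gedge => /and4P [_ _ _ /eqP ax] /eqP <-.
have nz1 : forall u : R, u \in zdg_vertices R -> (u == 0) = false /\ (u == 1) = false.
  move=> u; rewrite inE => /andP [/existsP [x /andP [x0 ux0]] u0].
  split; first exact: negbTE.
  apply/negbTE/negP => /eqP u1; move: ux0; rewrite u1 mul1r => x0'.
  by rewrite x0' in x0.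
have [? ?] := nz1 a Ha; have [? ?] := nz1 b Hb.
by exists a, b.
Qed.

Lemma force_in (x y z : nat) : (x %| y)%N -> (y %| z)%N || (z %| y)%N -> ~~ (x %| z)%N -> (z %| y)%N.
Proof. move=> xy /orP [yz|//] /negP []; exact: dvdn_trans yz. Qed.
Lemma force_out (x y z : nat) : (x %| y)%N -> (x %| z)%N || (z %| x)%N -> ~~ (z %| y)%N -> (x %| z)%N.
Proof. move=> xy /orP [//|zx] /negP []; exact: dvdn_trans xy. Qed.

Arguments force_in {x y z}.
Arguments force_out {x y z}.
Section Key.
Variables (R1 R2 : finComNzRingType) (a b : R1) (c d : R2).
Hypotheses (a0 : (a == 0) = false) (b0 : (b == 0) = false) (a1 : (a == 1) = false)
  (b1 : (b == 1) = false) (ab : (a == b) = false) (ab0 : a * b = 0).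
Hypotheses (c0 : (c == 0) = false) (d0 : (d == 0) = false) (c1 : (c == 1) = false)
  (d1 : (d == 1) = false) (cd : (c == d) = false) (cd0 : c * d = 0).

Lemma key : ~ is_divisor_graph (zdg_vertices (R1 * R2)%type) (@zdg_compl_adj (R1 * R2)%type).
Proof.
have ba0 : b * a = 0 by rewrite mulrC.
have dc0 : d * c = 0 by rewrite mulrC.
have o1 : ((1 : R1) == 0) = false by apply/negbTE; exact: oner_neq0.
have o2 : ((1 : R2) == 0) = false by apply/negbTE; exact: oner_neq0.
move=> [_ [f [finj _ fadj]]].
pose V := zdg_vertices (R1 * R2)%type.
have inV : forall u w : (R1 * R2)%type, w != 0 -> u * w == 0 -> u != 0 -> u \in V.
  move=> u w w0 uw u0; rewrite inE u0 andbT; apply/existsP; exists w; by rewrite w0 uw.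
pose vA : (R1 * R2)%type := (0, 1).
pose vC : (R1 * R2)%type := (0, c).
pose vP : (R1 * R2)%type := (1, 0).
pose vD : (R1 * R2)%type := (1, d).
pose vAa : (R1 * R2)%type := (a, 0).
pose vB : (R1 * R2)%type := (b, 1).
pose vBd : (R1 * R2)%type := (b, d).
have E : forall u v, u \in V -> v \in V -> u != v -> u * v != 0 ->
    (f u %| f v)%N || (f v %| f u)%N.
  by move=> u v hu hv huv uv; rewrite -fadj.
have NE : forall u v, u \in V -> v \in V -> u != v -> u * v == 0 ->
    ~~ (f u %| f v)%N /\ ~~ (f v %| f u)%N.
  by move=> u v hu hv huv uv; apply/norP; rewrite -fadj // /zdg_compl_adj uv.
have o1' : ((0 : R1) == 1) = false by rewrite eq_sym.
have o2' : ((0 : R2) == 1) = false by rewrite eq_sym.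
have a0' : (0 == a) = false by rewrite eq_sym.
have b0' : (0 == b) = false by rewrite eq_sym.
have c0' : (0 == c) = false by rewrite eq_sym.
have d0' : (0 == d) = false by rewrite eq_sym.
have a1' : (1 == a) = false by rewrite eq_sym.
have b1' : (1 == b) = false by rewrite eq_sym.
have c1' : (1 == c) = false by rewrite eq_sym.
have d1' : (1 == d) = false by rewrite eq_sym.
have ba : (b == a) = false by rewrite eq_sym.
have dc : (d == c) = false by rewrite eq_sym.
have hA : vA \in V by apply: (inV _ vP); (rewrite /= ?xpair_eqE /= ?mul0r ?mulr0 ?mul1r ?mulr1 ?ab0 ?ba0 ?cd0 ?dc0 ?eqxx ?o1 ?o2 ?o1' ?o2' ?a0 ?b0 ?c0 ?d0 ?a0' ?b0' ?c0' ?d0' ?a1 ?b1 ?c1 ?d1 ?a1' ?b1' ?c1' ?d1' ?ab ?ba ?cd ?dc //).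
have hC : vC \in V by apply: (inV _ vP); (rewrite /= ?xpair_eqE /= ?mul0r ?mulr0 ?mul1r ?mulr1 ?ab0 ?ba0 ?cd0 ?dc0 ?eqxx ?o1 ?o2 ?o1' ?o2' ?a0 ?b0 ?c0 ?d0 ?a0' ?b0' ?c0' ?d0' ?a1 ?b1 ?c1 ?d1 ?a1' ?b1' ?c1' ?d1' ?ab ?ba ?cd ?dc //).
have hP : vP \in V by apply: (inV _ vA); (rewrite /= ?xpair_eqE /= ?mul0r ?mulr0 ?mul1r ?mulr1 ?ab0 ?ba0 ?cd0 ?dc0 ?eqxx ?o1 ?o2 ?o1' ?o2' ?a0 ?b0 ?c0 ?d0 ?a0' ?b0' ?c0' ?d0' ?a1 ?b1 ?c1 ?d1 ?a1' ?b1' ?c1' ?d1' ?ab ?ba ?cd ?dc //).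
have hD : vD \in V by apply: (inV _ vC); (rewrite /= ?xpair_eqE /= ?mul0r ?mulr0 ?mul1r ?mulr1 ?ab0 ?ba0 ?cd0 ?dc0 ?eqxx ?o1 ?o2 ?o1' ?o2' ?a0 ?b0 ?c0 ?d0 ?a0' ?b0' ?c0' ?d0' ?a1 ?b1 ?c1 ?d1 ?a1' ?b1' ?c1' ?d1' ?ab ?ba ?cd ?dc //).
have hAa : vAa \in V by apply: (inV _ vA); (rewrite /= ?xpair_eqE /= ?mul0r ?mulr0 ?mul1r ?mulr1 ?ab0 ?ba0 ?cd0 ?dc0 ?eqxx ?o1 ?o2 ?o1' ?o2' ?a0 ?b0 ?c0 ?d0 ?a0' ?b0' ?c0' ?d0' ?a1 ?b1 ?c1 ?d1 ?a1' ?b1' ?c1' ?d1' ?ab ?ba ?cd ?dc //).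
have hB : vB \in V by apply: (inV _ vAa); (rewrite /= ?xpair_eqE /= ?mul0r ?mulr0 ?mul1r ?mulr1 ?ab0 ?ba0 ?cd0 ?dc0 ?eqxx ?o1 ?o2 ?o1' ?o2' ?a0 ?b0 ?c0 ?d0 ?a0' ?b0' ?c0' ?d0' ?a1 ?b1 ?c1 ?d1 ?a1' ?b1' ?c1' ?d1' ?ab ?ba ?cd ?dc //).
have hBd : vBd \in V by apply: (inV _ (a, c)); (rewrite /= ?xpair_eqE /= ?mul0r ?mulr0 ?mul1r ?mulr1 ?ab0 ?ba0 ?cd0 ?dc0 ?eqxx ?o1 ?o2 ?o1' ?o2' ?a0 ?b0 ?c0 ?d0 ?a0' ?b0' ?c0' ?d0' ?a1 ?b1 ?c1 ?d1 ?a1' ?b1' ?c1' ?d1' ?ab ?ba ?cd ?dc //).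
have e1 := E vA vD hA hD ltac:(rewrite /= ?xpair_eqE /= ?mul0r ?mulr0 ?mul1r ?mulr1 ?ab0 ?ba0 ?cd0 ?dc0 ?eqxx ?o1 ?o2 ?o1' ?o2' ?a0 ?b0 ?c0 ?d0 ?a0' ?b0' ?c0' ?d0' ?a1 ?b1 ?c1 ?d1 ?a1' ?b1' ?c1' ?d1' ?ab ?ba ?cd ?dc //) ltac:(rewrite /= ?xpair_eqE /= ?mul0r ?mulr0 ?mul1r ?mulr1 ?ab0 ?ba0 ?cd0 ?dc0 ?eqxx ?o1 ?o2 ?o1' ?o2' ?a0 ?b0 ?c0 ?d0 ?a0' ?b0' ?c0' ?d0' ?a1 ?b1 ?c1 ?d1 ?a1' ?b1' ?c1' ?d1' ?ab ?ba ?cd ?dc //).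
have e2 := E vD vAa hD hAa ltac:(rewrite /= ?xpair_eqE /= ?mul0r ?mulr0 ?mul1r ?mulr1 ?ab0 ?ba0 ?cd0 ?dc0 ?eqxx ?o1 ?o2 ?o1' ?o2' ?a0 ?b0 ?c0 ?d0 ?a0' ?b0' ?c0' ?d0' ?a1 ?b1 ?c1 ?d1 ?a1' ?b1' ?c1' ?d1' ?ab ?ba ?cd ?dc //) ltac:(rewrite /= ?xpair_eqE /= ?mul0r ?mulr0 ?mul1r ?mulr1 ?ab0 ?ba0 ?cd0 ?dc0 ?eqxx ?o1 ?o2 ?o1' ?o2' ?a0 ?b0 ?c0 ?d0 ?a0' ?b0' ?c0' ?d0' ?a1 ?b1 ?c1 ?d1 ?a1' ?b1' ?c1' ?d1' ?ab ?ba ?cd ?dc //).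
have e3 := E vD vB hD hB ltac:(rewrite /= ?xpair_eqE /= ?mul0r ?mulr0 ?mul1r ?mulr1 ?ab0 ?ba0 ?cd0 ?dc0 ?eqxx ?o1 ?o2 ?o1' ?o2' ?a0 ?b0 ?c0 ?d0 ?a0' ?b0' ?c0' ?d0' ?a1 ?b1 ?c1 ?d1 ?a1' ?b1' ?c1' ?d1' ?ab ?ba ?cd ?dc //) ltac:(rewrite /= ?xpair_eqE /= ?mul0r ?mulr0 ?mul1r ?mulr1 ?ab0 ?ba0 ?cd0 ?dc0 ?eqxx ?o1 ?o2 ?o1' ?o2' ?a0 ?b0 ?c0 ?d0 ?a0' ?b0' ?c0' ?d0' ?a1 ?b1 ?c1 ?d1 ?a1' ?b1' ?c1' ?d1' ?ab ?ba ?cd ?dc //).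
have e4 := E vB vC hB hC ltac:(rewrite /= ?xpair_eqE /= ?mul0r ?mulr0 ?mul1r ?mulr1 ?ab0 ?ba0 ?cd0 ?dc0 ?eqxx ?o1 ?o2 ?o1' ?o2' ?a0 ?b0 ?c0 ?d0 ?a0' ?b0' ?c0' ?d0' ?a1 ?b1 ?c1 ?d1 ?a1' ?b1' ?c1' ?d1' ?ab ?ba ?cd ?dc //) ltac:(rewrite /= ?xpair_eqE /= ?mul0r ?mulr0 ?mul1r ?mulr1 ?ab0 ?ba0 ?cd0 ?dc0 ?eqxx ?o1 ?o2 ?o1' ?o2' ?a0 ?b0 ?c0 ?d0 ?a0' ?b0' ?c0' ?d0' ?a1 ?b1 ?c1 ?d1 ?a1' ?b1' ?c1' ?d1' ?ab ?ba ?cd ?dc //).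
have e5 := E vB vP hB hP ltac:(rewrite /= ?xpair_eqE /= ?mul0r ?mulr0 ?mul1r ?mulr1 ?ab0 ?ba0 ?cd0 ?dc0 ?eqxx ?o1 ?o2 ?o1' ?o2' ?a0 ?b0 ?c0 ?d0 ?a0' ?b0' ?c0' ?d0' ?a1 ?b1 ?c1 ?d1 ?a1' ?b1' ?c1' ?d1' ?ab ?ba ?cd ?dc //) ltac:(rewrite /= ?xpair_eqE /= ?mul0r ?mulr0 ?mul1r ?mulr1 ?ab0 ?ba0 ?cd0 ?dc0 ?eqxx ?o1 ?o2 ?o1' ?o2' ?a0 ?b0 ?c0 ?d0 ?a0' ?b0' ?c0' ?d0' ?a1 ?b1 ?c1 ?d1 ?a1' ?b1' ?c1' ?d1' ?ab ?ba ?cd ?dc //).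
have e6 := E vP vAa hP hAa ltac:(rewrite /= ?xpair_eqE /= ?mul0r ?mulr0 ?mul1r ?mulr1 ?ab0 ?ba0 ?cd0 ?dc0 ?eqxx ?o1 ?o2 ?o1' ?o2' ?a0 ?b0 ?c0 ?d0 ?a0' ?b0' ?c0' ?d0' ?a1 ?b1 ?c1 ?d1 ?a1' ?b1' ?c1' ?d1' ?ab ?ba ?cd ?dc //) ltac:(rewrite /= ?xpair_eqE /= ?mul0r ?mulr0 ?mul1r ?mulr1 ?ab0 ?ba0 ?cd0 ?dc0 ?eqxx ?o1 ?o2 ?o1' ?o2' ?a0 ?b0 ?c0 ?d0 ?a0' ?b0' ?c0' ?d0' ?a1 ?b1 ?c1 ?d1 ?a1' ?b1' ?c1' ?d1' ?ab ?ba ?cd ?dc //).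
have e7 := E vP vBd hP hBd ltac:(rewrite /= ?xpair_eqE /= ?mul0r ?mulr0 ?mul1r ?mulr1 ?ab0 ?ba0 ?cd0 ?dc0 ?eqxx ?o1 ?o2 ?o1' ?o2' ?a0 ?b0 ?c0 ?d0 ?a0' ?b0' ?c0' ?d0' ?a1 ?b1 ?c1 ?d1 ?a1' ?b1' ?c1' ?d1' ?ab ?ba ?cd ?dc //) ltac:(rewrite /= ?xpair_eqE /= ?mul0r ?mulr0 ?mul1r ?mulr1 ?ab0 ?ba0 ?cd0 ?dc0 ?eqxx ?o1 ?o2 ?o1' ?o2' ?a0 ?b0 ?c0 ?d0 ?a0' ?b0' ?c0' ?d0' ?a1 ?b1 ?c1 ?d1 ?a1' ?b1' ?c1' ?d1' ?ab ?ba ?cd ?dc //).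
have e8 := E vBd vA hBd hA ltac:(rewrite /= ?xpair_eqE /= ?mul0r ?mulr0 ?mul1r ?mulr1 ?ab0 ?ba0 ?cd0 ?dc0 ?eqxx ?o1 ?o2 ?o1' ?o2' ?a0 ?b0 ?c0 ?d0 ?a0' ?b0' ?c0' ?d0' ?a1 ?b1 ?c1 ?d1 ?a1' ?b1' ?c1' ?d1' ?ab ?ba ?cd ?dc //) ltac:(rewrite /= ?xpair_eqE /= ?mul0r ?mulr0 ?mul1r ?mulr1 ?ab0 ?ba0 ?cd0 ?dc0 ?eqxx ?o1 ?o2 ?o1' ?o2' ?a0 ?b0 ?c0 ?d0 ?a0' ?b0' ?c0' ?d0' ?a1 ?b1 ?c1 ?d1 ?a1' ?b1' ?c1' ?d1' ?ab ?ba ?cd ?dc //).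
have e9 := E vA vC hA hC ltac:(rewrite /= ?xpair_eqE /= ?mul0r ?mulr0 ?mul1r ?mulr1 ?ab0 ?ba0 ?cd0 ?dc0 ?eqxx ?o1 ?o2 ?o1' ?o2' ?a0 ?b0 ?c0 ?d0 ?a0' ?b0' ?c0' ?d0' ?a1 ?b1 ?c1 ?d1 ?a1' ?b1' ?c1' ?d1' ?ab ?ba ?cd ?dc //) ltac:(rewrite /= ?xpair_eqE /= ?mul0r ?mulr0 ?mul1r ?mulr1 ?ab0 ?ba0 ?cd0 ?dc0 ?eqxx ?o1 ?o2 ?o1' ?o2' ?a0 ?b0 ?c0 ?d0 ?a0' ?b0' ?c0' ?d0' ?a1 ?b1 ?c1 ?d1 ?a1' ?b1' ?c1' ?d1' ?ab ?ba ?cd ?dc //).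
have [n1 n1'] := NE vC vD hC hD ltac:(rewrite /= ?xpair_eqE /= ?mul0r ?mulr0 ?mul1r ?mulr1 ?ab0 ?ba0 ?cd0 ?dc0 ?eqxx ?o1 ?o2 ?o1' ?o2' ?a0 ?b0 ?c0 ?d0 ?a0' ?b0' ?c0' ?d0' ?a1 ?b1 ?c1 ?d1 ?a1' ?b1' ?c1' ?d1' ?ab ?ba ?cd ?dc //) ltac:(rewrite /= ?xpair_eqE /= ?mul0r ?mulr0 ?mul1r ?mulr1 ?ab0 ?ba0 ?cd0 ?dc0 ?eqxx ?o1 ?o2 ?o1' ?o2' ?a0 ?b0 ?c0 ?d0 ?a0' ?b0' ?c0' ?d0' ?a1 ?b1 ?c1 ?d1 ?a1' ?b1' ?c1' ?d1' ?ab ?ba ?cd ?dc //).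
have [n2 n2'] := NE vA vAa hA hAa ltac:(rewrite /= ?xpair_eqE /= ?mul0r ?mulr0 ?mul1r ?mulr1 ?ab0 ?ba0 ?cd0 ?dc0 ?eqxx ?o1 ?o2 ?o1' ?o2' ?a0 ?b0 ?c0 ?d0 ?a0' ?b0' ?c0' ?d0' ?a1 ?b1 ?c1 ?d1 ?a1' ?b1' ?c1' ?d1' ?ab ?ba ?cd ?dc //) ltac:(rewrite /= ?xpair_eqE /= ?mul0r ?mulr0 ?mul1r ?mulr1 ?ab0 ?ba0 ?cd0 ?dc0 ?eqxx ?o1 ?o2 ?o1' ?o2' ?a0 ?b0 ?c0 ?d0 ?a0' ?b0' ?c0' ?d0' ?a1 ?b1 ?c1 ?d1 ?a1' ?b1' ?c1' ?d1' ?ab ?ba ?cd ?dc //).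
have [n3 n3'] := NE vAa vB hAa hB ltac:(rewrite /= ?xpair_eqE /= ?mul0r ?mulr0 ?mul1r ?mulr1 ?ab0 ?ba0 ?cd0 ?dc0 ?eqxx ?o1 ?o2 ?o1' ?o2' ?a0 ?b0 ?c0 ?d0 ?a0' ?b0' ?c0' ?d0' ?a1 ?b1 ?c1 ?d1 ?a1' ?b1' ?c1' ?d1' ?ab ?ba ?cd ?dc //) ltac:(rewrite /= ?xpair_eqE /= ?mul0r ?mulr0 ?mul1r ?mulr1 ?ab0 ?ba0 ?cd0 ?dc0 ?eqxx ?o1 ?o2 ?o1' ?o2' ?a0 ?b0 ?c0 ?d0 ?a0' ?b0' ?c0' ?d0' ?a1 ?b1 ?c1 ?d1 ?a1' ?b1' ?c1' ?d1' ?ab ?ba ?cd ?dc //).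
have [n4 n4'] := NE vC vP hC hP ltac:(rewrite /= ?xpair_eqE /= ?mul0r ?mulr0 ?mul1r ?mulr1 ?ab0 ?ba0 ?cd0 ?dc0 ?eqxx ?o1 ?o2 ?o1' ?o2' ?a0 ?b0 ?c0 ?d0 ?a0' ?b0' ?c0' ?d0' ?a1 ?b1 ?c1 ?d1 ?a1' ?b1' ?c1' ?d1' ?ab ?ba ?cd ?dc //) ltac:(rewrite /= ?xpair_eqE /= ?mul0r ?mulr0 ?mul1r ?mulr1 ?ab0 ?ba0 ?cd0 ?dc0 ?eqxx ?o1 ?o2 ?o1' ?o2' ?a0 ?b0 ?c0 ?d0 ?a0' ?b0' ?c0' ?d0' ?a1 ?b1 ?c1 ?d1 ?a1' ?b1' ?c1' ?d1' ?ab ?ba ?cd ?dc //).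
have [n5 n5'] := NE vAa vBd hAa hBd ltac:(rewrite /= ?xpair_eqE /= ?mul0r ?mulr0 ?mul1r ?mulr1 ?ab0 ?ba0 ?cd0 ?dc0 ?eqxx ?o1 ?o2 ?o1' ?o2' ?a0 ?b0 ?c0 ?d0 ?a0' ?b0' ?c0' ?d0' ?a1 ?b1 ?c1 ?d1 ?a1' ?b1' ?c1' ?d1' ?ab ?ba ?cd ?dc //) ltac:(rewrite /= ?xpair_eqE /= ?mul0r ?mulr0 ?mul1r ?mulr1 ?ab0 ?ba0 ?cd0 ?dc0 ?eqxx ?o1 ?o2 ?o1' ?o2' ?a0 ?b0 ?c0 ?d0 ?a0' ?b0' ?c0' ?d0' ?a1 ?b1 ?c1 ?d1 ?a1' ?b1' ?c1' ?d1' ?ab ?ba ?cd ?dc //).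
have [n6 n6'] := NE vP vA hP hA ltac:(rewrite /= ?xpair_eqE /= ?mul0r ?mulr0 ?mul1r ?mulr1 ?ab0 ?ba0 ?cd0 ?dc0 ?eqxx ?o1 ?o2 ?o1' ?o2' ?a0 ?b0 ?c0 ?d0 ?a0' ?b0' ?c0' ?d0' ?a1 ?b1 ?c1 ?d1 ?a1' ?b1' ?c1' ?d1' ?ab ?ba ?cd ?dc //) ltac:(rewrite /= ?xpair_eqE /= ?mul0r ?mulr0 ?mul1r ?mulr1 ?ab0 ?ba0 ?cd0 ?dc0 ?eqxx ?o1 ?o2 ?o1' ?o2' ?a0 ?b0 ?c0 ?d0 ?a0' ?b0' ?c0' ?d0' ?a1 ?b1 ?c1 ?d1 ?a1' ?b1' ?c1' ?d1' ?ab ?ba ?cd ?dc //).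
have [n7 n7'] := NE vBd vC hBd hC ltac:(rewrite /= ?xpair_eqE /= ?mul0r ?mulr0 ?mul1r ?mulr1 ?ab0 ?ba0 ?cd0 ?dc0 ?eqxx ?o1 ?o2 ?o1' ?o2' ?a0 ?b0 ?c0 ?d0 ?a0' ?b0' ?c0' ?d0' ?a1 ?b1 ?c1 ?d1 ?a1' ?b1' ?c1' ?d1' ?ab ?ba ?cd ?dc //) ltac:(rewrite /= ?xpair_eqE /= ?mul0r ?mulr0 ?mul1r ?mulr1 ?ab0 ?ba0 ?cd0 ?dc0 ?eqxx ?o1 ?o2 ?o1' ?o2' ?a0 ?b0 ?c0 ?d0 ?a0' ?b0' ?c0' ?d0' ?a1 ?b1 ?c1 ?d1 ?a1' ?b1' ?c1' ?d1' ?ab ?ba ?cd ?dc //).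
have neAC : f vA != f vC.
  apply/negP => /eqP /(finj _ _ hA hC) /eqP; (rewrite /= ?xpair_eqE /= ?mul0r ?mulr0 ?mul1r ?mulr1 ?ab0 ?ba0 ?cd0 ?dc0 ?eqxx ?o1 ?o2 ?o1' ?o2' ?a0 ?b0 ?c0 ?d0 ?a0' ?b0' ?c0' ?d0' ?a1 ?b1 ?c1 ?d1 ?a1' ?b1' ?c1' ?d1' ?ab ?ba ?cd ?dc //).
have neCA : (f vA == f vC) = false by apply/negbTE.
have cm : forall x y, (x %| y)%N || (y %| x)%N -> (y %| x)%N || (x %| y)%N by move=> x y; rewrite orbC.
case/orP: (e9) => h0.
- have s1 := force_out h0 ltac:(first [exact e1 | exact (cm _ _ e1)]) n1'.
  have s2 := force_in s1 ltac:(first [exact e2 | exact (cm _ _ e2)]) n2.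
  have s3 := force_in s2 ltac:(first [exact e3 | exact (cm _ _ e3)]) n3.
  have s4 := force_out s3 ltac:(first [exact e4 | exact (cm _ _ e4)]) n1.
  have s5 := force_out s4 ltac:(first [exact e5 | exact (cm _ _ e5)]) n4'.
  have s6 := force_in s5 ltac:(first [exact e6 | exact (cm _ _ e6)]) n3'.
  have s7 := force_in s6 ltac:(first [exact e7 | exact (cm _ _ e7)]) n5.
  have s8 := force_out s7 ltac:(first [exact e8 | exact (cm _ _ e8)]) n6'.
  have s9 := force_in s8 ltac:(first [exact e9 | exact (cm _ _ e9)]) n7.
  by move: neCA; rewrite eqn_dvd h0 s9.
- have s1 := force_in h0 ltac:(first [exact e1 | exact (cm _ _ e1)]) n1.
  have s2 := force_out s1 ltac:(first [exact e2 | exact (cm _ _ e2)]) n2'.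
  have s3 := force_out s2 ltac:(first [exact e3 | exact (cm _ _ e3)]) n3'.
  have s4 := force_in s3 ltac:(first [exact e4 | exact (cm _ _ e4)]) n1'.
  have s5 := force_in s4 ltac:(first [exact e5 | exact (cm _ _ e5)]) n4.
  have s6 := force_out s5 ltac:(first [exact e6 | exact (cm _ _ e6)]) n3.
  have s7 := force_out s6 ltac:(first [exact e7 | exact (cm _ _ e7)]) n5'.
  have s8 := force_in s7 ltac:(first [exact e8 | exact (cm _ _ e8)]) n6.
  have s9 := force_out s8 ltac:(first [exact e9 | exact (cm _ _ e9)]) n7'.
  by move: neCA; rewrite eqn_dvd h0 s9.
Qed.
End Key.

Theorem theorem2p4 (R1 R2 : finComNzRingType) :
  principal_ideal_ring R1 -> principal_ideal_ring R2 ->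
  has_diameter (zdg_vertices R1) (@zdg_adj R1) 1 ->
  has_diameter (zdg_vertices R2) (@zdg_adj R2) 1 ->
  ~ is_divisor_graph (zdg_vertices (R1 * R2)%type) (@zdg_compl_adj (R1 * R2)%type).
Proof.
move=> _ _ /extract [a [b [[a0 b0 a1 b1 ab] ab0]]] /extract [c [d [[c0 d0 c1 d1 cd] cd0]]].
exact: (@key R1 R2 a b c d a0 b0 a1 b1 ab ab0 c0 d0 c1 d1 cd cd0).
Qed.
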